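(* Let $T(x_1,x_2,x_3)$ be a real multivariate polynomial, and suppose $p\mapsto T(p,\sqrt{p},\sqrt{1-p})$ is not the zero function on $[0,1]$. If $T(z,\sqrt{z},\sqrt{1-z})=0$ for some $z\in[0,1]$, then there exist $\delta>0$, a positive integer $k$, and a function $m(p)$ continuous on $[z-\delta,z+\delta]\cap[0,1]$ with $m(z)\neq0$, such that $T(p,\sqrt{p},\sqrt{1-p})=(p-z)^{k/2}m(p)$ for $p\in[z-\delta,z+\delta]\cap[0,1]$. *)

(* Defs.v *)
From HB Require Import structures.
From mathcomp Require Import all_boot all_order all_algebra.
From mathcomp Require Import all_classical all_reals all_analysis.
From mathcomp Require mpoly.
Set Implicit Arguments. Unset Strict Implicit. Unset Printing Implicit Defensive.
Import Order.TTheory GRing.Theory Num.Theory.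
Local Open Scope ring_scope.

Definition evalT (R : realType) (T : mpoly.mpoly 3 R) (p : R) : R :=
  mpoly.meval (fun i : 'I_3 => [:: p; Num.sqrt p; Num.sqrt (1 - p)]`_i) T.

(* Real reading of x^(k/2):  x^(k/2) := x^((k-1)/2) * sqrt x  for odd k
   with sqrt x read as sqrt |x| (the factor i dropped when x < 0), and
   x^(k/2) := x^(k/2) (integer power) for even k. *)
Definition halfpow (R : realType) (k : nat) (x : R) : R :=
  x ^+ k./2 * (Num.sqrt `|x|) ^+ odd k.

(* Main.v *)
Require Import Defs.
From HB Require Import structures.
From mathcomp Require Import all_boot all_order all_algebra.
From mathcomp Require Import all_classical all_reals all_analysis.
From mathcomp Require mpoly.
From mathcomp Require Import ring lra.
Import Order.TTheory GRing.Theory Num.Theory numFieldNormedType.Exports.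
Local Open Scope classical_set_scope.
Local Open Scope ring_scope.

Section Aux.
Variable R : realType.
Implicit Types f g : R -> R.

Lemma cM f g : continuous f -> continuous g -> continuous (fun x => f x * g x).
Proof. by move=> hf hg x; exact: (continuousM (hf x) (hg x)). Qed.
Lemma cD f g : continuous f -> continuous g -> continuous (fun x => f x + g x).
Proof. by move=> hf hg x; apply: (continuousD (hf x) (hg x)). Qed.
Lemma cN f : continuous f -> continuous (fun x => - f x).
Proof. by move=> hf x; exact: (continuousN (hf x)). Qed.
Lemma cC (c : R) : continuous (fun _ : R => c).
Proof. by move=> x; apply: cst_continuous. Qed.
Lemma cId : continuous (fun x : R => x).
Proof. by move=> x. Qed.
Lemma cV f : (forall x, f x != 0) -> continuous f -> continuous (fun x => (f x)^-1).
Proof. by move=> h hf x; exact: (continuousV (h x) (hf x)). Qed.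
Lemma cX f n : continuous f -> continuous (fun x => f x ^+ n).
Proof. move=> hf x. exact: (continuous_comp (hf x) (@exprn_continuous R n (f x))). Qed.
Lemma cS f : continuous f -> continuous (fun x => Num.sqrt (f x)).
Proof. move=> hf x. exact: (continuous_comp (hf x) (@sqrt_continuous R (f x))). Qed.
Lemma cH (P : {poly R}) f : continuous f -> continuous (fun x => P.[f x]).
Proof. move=> hf x. exact: (continuous_comp (hf x) (@continuous_horner R P (f x))). Qed.
Definition ss (p : R) := Num.sqrt p.
Definition tt (p : R) := Num.sqrt (1 - p).
Definition uu (p : R) := ss p / (1 + tt p).

Lemma tt_ge0 p : 0 <= tt p. Proof. exact: sqrtr_ge0. Qed.
Lemma ss_ge0 p : 0 <= ss p. Proof. exact: sqrtr_ge0. Qed.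
Lemma a_neq0 p : 1 + tt p != 0.
Proof. have := tt_ge0 p. apply: contraTneq => h. lra. Qed.

Lemma alg1 (t : R) : 1 + t != 0 -> 1 + (1 - t ^+ 2) / (1 + t) ^+ 2 = 2 / (1 + t).
Proof. by move=> h; field. Qed.
Lemma alg2 (t : R) : 1 + t != 0 ->
  4 * ((1 - t ^+ 2) / (1 + t) ^+ 2) = (1 - t ^+ 2) * (2 / (1 + t)) ^+ 2.
Proof. by move=> h; field. Qed.
Lemma alg3 (s t : R) : 1 + t != 0 -> 2 * (s / (1 + t)) = s * (2 / (1 + t)).
Proof. by move=> h; field. Qed.
Lemma alg4 (t : R) : 1 + t != 0 ->
  1 - (1 - t ^+ 2) / (1 + t) ^+ 2 = t * (2 / (1 + t)).
Proof. by move=> h; field. Qed.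

Lemma uu_facts (p : R) : 0 <= p <= 1 ->
  let x := uu p in let d := 1 + x ^+ 2 in
  d = 2 / (1 + tt p) /\ 4 * x ^+ 2 = p * d ^+ 2 /\ 2 * x = ss p * d /\
  1 - x ^+ 2 = tt p * d.
Proof.
move=> /andP[p0 p1] x d.
have hs : ss p ^+ 2 = p by rewrite /ss sqr_sqrtr.
have ht : tt p ^+ 2 = 1 - p by rewrite /tt sqr_sqrtr // subr_ge0.
have hp : p = 1 - tt p ^+ 2 by rewrite ht opprB addrC subrK.
have ha := a_neq0 p.
have hx : x ^+ 2 = (1 - tt p ^+ 2) / (1 + tt p) ^+ 2.
  by rewrite /x /uu expr_div_n hs -hp.
have hd : d = 2 / (1 + tt p) by rewrite /d hx (alg1 _ ha).
split => //; split; first by rewrite hx hd (alg2 _ ha) -hp.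
split; first by rewrite hd /x /uu (alg3 _ _ ha).
by rewrite hx hd (alg4 _ ha).
Qed.

Lemma helpK (d A : R) a b n : (a + b = n)%N -> d ^+ a * (A * d ^+ b) = d ^+ n * A.
Proof. by move=> <-; rewrite exprD -mulrA (mulrC A). Qed.

Lemma sum_eq_seq (I : Type) (r : seq I) (F G : I -> R) :
  (forall i, List.In i r -> F i = G i) -> \sum_(i <- r) F i = \sum_(i <- r) G i.
Proof.
elim: r => [|a r IH] h; first by rewrite !big_nil.
rewrite !big_cons h /=; last by left.
by rewrite IH // => i hi; apply: h; right.
Qed.

Lemma max_In (I : Type) (r : seq I) (f : I -> nat) i :
  List.In i r -> (f i <= \max_(j <- r) f j)%N.
Proof.
elim: r => [|a r IH] //= [->|hi]; rewrite big_cons; first exact: leq_maxl.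
exact: leq_trans (IH hi) (leq_maxr _ _).
Qed.

Lemma inv_half (a : R) : a != 0 -> 2 / a * (a / 2) = 1.
Proof. by move=> h; field. Qed.

Lemma repr (T : mpoly.mpoly 3 R) : exists (P : {poly R}) (N : nat),
  forall p : R, 0 <= p <= 1 -> evalT T p = P.[uu p] * ((1 + tt p) / 2) ^+ N.
Proof.
pose w (i : 'I_3) : nat := nth 0%N [:: 2%N; 1%N; 1%N] i.
pose q (i : 'I_3) : {poly R} := nth 0 [:: 4%:P * 'X ^+ 2; 2%:P * 'X; 1 - 'X ^+ 2] i.
pose mw (m : mpoly.multinom 3) := (\sum_(i < 3) w i * mpoly.fun_of_multinom m i)%N.
pose N := (\max_(m <- mpoly.msupp T) mw m)%N.
pose D : {poly R} := 1 + 'X ^+ 2.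
pose pm m := D ^+ (N - mw m) * \prod_(i < 3) q i ^+ mpoly.fun_of_multinom m i.
exists (\sum_(m <- mpoly.msupp T) mpoly.mcoeff m T *: pm m), N.
move=> p hp.
have [hd [h4 [h2 h1]]] := uu_facts _ hp.
set x := uu p in hd h4 h2 h1 *.
set d := 1 + x ^+ 2 in hd h4 h2 h1 *.
have hq : forall i, (q i).[x] = [:: p; ss p; tt p]`_i * d ^+ w i.
  case => [[|[|[|//]]] hi] /=; rewrite /q /w /=.
  - by rewrite hornerCM hornerXn; exact: h4.
  - by rewrite hornerCM hornerX expr1; exact: h2.
  - by rewrite hornerD hornerN hornerXn hornerC expr1; exact: h1.
have key m : (mw m <= N)%N -> (pm m).[x] = d ^+ N * \prod_(i < 3) [:: p; ss p; tt p]`_i ^+ mpoly.fun_of_multinom m i.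
  move=> hm; rewrite /pm hornerM horner_exp horner_prod.
  under eq_bigr do rewrite horner_exp hq exprMn -exprM.
  rewrite big_split /= prodrXr.
  have hD : D.[x] = d by rewrite /D !hornerE.
  rewrite hD; apply: helpK; exact: subnK hm.
rewrite /evalT mpoly.mevalE horner_sum mulr_suml.
apply: sum_eq_seq => m hm.
rewrite hornerZ key; last exact: (max_In _ _ mw m hm).
rewrite -mulrA mulrAC -exprMn hd.
rewrite (inv_half _ (a_neq0 p)) expr1n mul1r.
done.
Qed.

Lemma ss_cont : continuous ss. Proof. exact: (@cS (fun x => x) cId). Qed.
Lemma tt_cont : continuous tt. Proof. exact: (@cS (fun x => 1 - x) (@cD (fun _ => 1) (fun x => - x) (cC 1) (@cN (fun x => x) cId))). Qed.
Lemma uu_cont : continuous uu.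
Proof. rewrite /uu; apply: cM; [exact: ss_cont| apply: cV; [exact: a_neq0| apply: cD; [exact: cC | exact: tt_cont]]]. Qed.

Lemma hp_pos (j : nat) (x : R) : 0 <= x -> Num.sqrt x ^+ j = halfpow j x.
Proof.
move=> hx; rewrite /halfpow ger0_norm // -[in LHS](odd_double_half j) exprD.
by rewrite -muln2 mulnC exprM sqr_sqrtr // mulrC.
Qed.

Lemma hp_neg (j : nat) (x : R) : x <= 0 ->
  Num.sqrt (- x) ^+ j = (-1) ^+ j./2 * halfpow j x.
Proof.
move=> hx; rewrite /halfpow ler0_norm // -[in LHS](odd_double_half j) exprD.
rewrite -muln2 mulnC exprM sqr_sqrtr ?oppr_ge0 // [(- x) ^+ _]exprNn.
by rewrite [LHS]mulrC -mulrA.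
Qed.

Lemma hp_even (j : nat) (x : R) : halfpow j.*2 x = x ^+ j.
Proof. by rewrite /halfpow doubleK odd_double expr0 mulr1. Qed.

Lemma alg5 (s t : R) : s ^+ 2 + t ^+ 2 = 1 -> 0 <= s -> 0 <= t ->
  s / (1 + t) - 1 = t * (- (s + 1 + t) / ((s + 1) * (1 + t))).
Proof.
move=> h hs ht.
have h1 : s + 1 != 0 by apply: contraTneq isT => e; lra.
have h2 : 1 + t != 0 by apply: contraTneq isT => e; lra.
have E : s / (1 + t) - 1 - t * (- (s + 1 + t) / ((s + 1) * (1 + t)))
   = (s ^+ 2 + t ^+ 2 - 1) / ((s + 1) * (1 + t)).
  by field; rewrite h1 h2.
by apply/eqP; rewrite -subr_eq0 E h subrr mul0r.
Qed.

Lemma alg6 (s t s0 t0 : R) : t ^+ 2 = 1 - s ^+ 2 -> t0 ^+ 2 = 1 - s0 ^+ 2 ->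
  s + s0 != 0 -> s * t0 + s0 * t != 0 -> 1 + t != 0 -> 1 + t0 != 0 ->
  s / (1 + t) - s0 / (1 + t0) = (s ^+ 2 - s0 ^+ 2) *
    (((s + s0)^-1 + (s * t0 + s0 * t)^-1) / ((1 + t) * (1 + t0))).
Proof.
move=> ht ht0 h1 h2 h3 h4.
have E : s / (1 + t) - s0 / (1 + t0) - (s ^+ 2 - s0 ^+ 2) *
    (((s + s0)^-1 + (s * t0 + s0 * t)^-1) / ((1 + t) * (1 + t0)))
  = (s ^+ 2 * t0 ^+ 2 - s0 ^+ 2 * t ^+ 2 - s ^+ 2 + s0 ^+ 2) /
    ((s * t0 + s0 * t) * (1 + t) * (1 + t0)).
  by field; rewrite h1 h2 h3 h4.
have N0 : s ^+ 2 * t0 ^+ 2 - s0 ^+ 2 * t ^+ 2 - s ^+ 2 + s0 ^+ 2 = 0.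
  by rewrite ht ht0; ring.
by apply/eqP; rewrite -subr_eq0 E N0 mul0r.
Qed.

Lemma case_lem (z : R) (j : nat) : 0 <= z <= 1 -> (0 < j)%N ->
  exists k : nat, (0 < k)%N /\ exists w : R -> R, continuous w /\ w z != 0 /\
  forall p : R, 0 <= p <= 1 -> (uu p - uu z) ^+ j = halfpow k (p - z) * w p.
Proof.
move=> /andP[z0 z1] jpos.
have [ez0|nz0] := eqVneq z 0.
  subst z; exists j; split => //.
  exists (fun p => (1 + tt p)^-1 ^+ j); split.
    apply: cX; apply: cV; [exact: a_neq0 | apply: cD; [exact: cC | exact: tt_cont]].
  split; first by rewrite expf_neq0 // invr_eq0 a_neq0.
  move=> p /andP[p0 p1].
  have -> : uu 0 = 0 by rewrite /uu /ss sqrtr0 mul0r.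
  by rewrite !subr0 /uu exprMn hp_pos.
have [ez1|nz1] := eqVneq z 1.
  subst z; exists j; split => //.
  pose W p := - (ss p + 1 + tt p) / ((ss p + 1) * (1 + tt p)).
  have sp p : ss p + 1 != 0.
    have := ss_ge0 p; apply: contraTneq => e; lra.
  have Wn0 p : W p != 0.
    rewrite /W mulf_neq0 // ?oppr_eq0 ?invr_eq0 ?mulf_neq0 ?a_neq0 //.
    have h1 := ss_ge0 p; have h2 := tt_ge0 p; apply/negP => /eqP e; lra.
  have Wc : continuous W.
    apply: cM; first by apply: cN; apply: cD; [apply: cD; [exact: ss_cont | exact: cC] | exact: tt_cont].
    apply: cV; first by move=> p; rewrite mulf_neq0 ?a_neq0.
    apply: cM; apply: cD; (exact: ss_cont || exact: cC || exact: tt_cont).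
  exists (fun p => (-1) ^+ j./2 * W p ^+ j); split.
    by apply: cM; [exact: cC | apply: cX].
  split; first by rewrite mulf_neq0 ?expf_neq0 ?oppr_eq0 ?oner_eq0.
  move=> p /andP[p0 p1].
  have -> : uu 1 = 1 by rewrite /uu /ss /tt subrr sqrtr0 sqrtr1 addr0 divr1.
  have hst : ss p ^+ 2 + tt p ^+ 2 = 1.
    by rewrite /ss /tt !sqr_sqrtr ?subr_ge0 // addrC subrK.
  rewrite /uu (alg5 _ _ hst (ss_ge0 p) (tt_ge0 p)) -/(W p) exprMn.
  rewrite /tt -(opprB p 1) hp_neg ?subr_le0 //.
  by rewrite (mulrC ((-1) ^+ _)) -mulrA.
exists j.*2; split; first by rewrite double_gt0.
have zp : 0 < z by rewrite lt_neqAle eq_sym nz0 z0.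
have zl : z < 1 by rewrite lt_neqAle nz1 z1.
have s0p : 0 < ss z by rewrite /ss sqrtr_gt0.
have t0p : 0 < tt z by rewrite /tt sqrtr_gt0 subr_gt0.
have Ap p : 0 < ss p + ss z by have := ss_ge0 p; lra.
have Bp p : 0 < ss p * tt z + ss z * tt p.
  have [pp|pn] := ltrP 0 p.
    have : 0 < ss p by rewrite /ss sqrtr_gt0.
    move=> h; have := mulr_gt0 h t0p; have := mulr_ge0 (ltW s0p) (tt_ge0 p); lra.
  have : 0 < tt p by rewrite /tt sqrtr_gt0 subr_gt0; lra.
  move=> h; have := mulr_gt0 s0p h; have := mulr_ge0 (ss_ge0 p) (ltW t0p); lra.
have Cp p : 0 < (1 + tt p) * (1 + tt z).
  by apply: mulr_gt0; have := tt_ge0 p; have := tt_ge0 z; lra.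
pose W p := ((ss p + ss z)^-1 + (ss p * tt z + ss z * tt p)^-1) /
   ((1 + tt p) * (1 + tt z)).
have Wp p : 0 < W p.
  rewrite /W; apply: mulr_gt0; last by rewrite invr_gt0.
  by apply: addr_gt0; rewrite invr_gt0.
have Wc : continuous W.
  apply: cM; last first.
    apply: cV; first by move=> p; rewrite gt_eqF.
    apply: cM; [apply: cD; [exact: cC | exact: tt_cont] | exact: cC].
  apply: cD.
    apply: cV; first by move=> p; rewrite gt_eqF.
    apply: cD; [exact: ss_cont | exact: cC].
  apply: cV; first by move=> p; rewrite gt_eqF.
  apply: cD; apply: cM; (exact: ss_cont || exact: cC || exact: tt_cont).
exists (fun p => W p ^+ j); split; first by apply: cX.
split; first by rewrite expf_neq0 // gt_eqF.
move=> p /andP[p0 p1].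
have ht (p' : R) : 0 <= p' -> p' <= 1 -> tt p' ^+ 2 = 1 - ss p' ^+ 2.
  by move=> a b; rewrite /ss /tt !sqr_sqrtr // subr_ge0.
rewrite hp_even -exprMn; congr (_ ^+ _).
rewrite /uu (alg6 _ _ _ _ (ht p p0 p1) (ht z z0 z1) (lt0r_neq0 (Ap p)) (lt0r_neq0 (Bp p)) (a_neq0 p) (a_neq0 z)).
by rewrite /ss !sqr_sqrtr.
Qed.
End Aux.
Arguments ss {R}. Arguments tt {R}. Arguments uu {R}. Arguments a_neq0 {R}.

Theorem lemma3 (R : realType) (T : mpoly.mpoly 3 R) (z : R) :
  (exists p : R, 0 <= p <= 1 /\ evalT T p != 0) ->
  0 <= z <= 1 -> evalT T z = 0 ->
  exists delta : R, 0 < delta /\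
  exists k : nat, (0 < k)%N /\
  exists m : R -> R,
    {within `[z - delta, z + delta] `&` `[0, 1], continuous m} /\
    m z != 0 /\
    forall p : R, z - delta <= p <= z + delta -> 0 <= p <= 1 ->
      evalT T p = halfpow k (p - z) * m p.
Proof.
move=> [p0 [hp0 hne]] hz hTz.
have [P [N hP]] := @repr R T.
have Pn0 : P != 0.
  by apply: contraNneq hne => P0; rewrite hP // P0 horner0 mul0r.
have cn0 : forall p : R, ((1 + tt p) / 2) ^+ N != 0.
  by move=> p; rewrite expf_neq0 // mulf_neq0 ?a_neq0 // invr_eq0 pnatr_eq0.
have rootP : P.[uu z] = 0.
  by move: hTz; rewrite hP // => /eqP; rewrite mulf_eq0 (negbTE (cn0 z)) orbF => /eqP.
have [j [Q hQ hPQ]] := multiplicity_XsubC P (uu z).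
have Qz : Q.[uu z] != 0 by move: hQ; rewrite Pn0.
have jpos : (0 < j)%N.
  rewrite lt0n; apply/negP => /eqP j0; move: hPQ; rewrite j0 expr0 mulr1 => hPQ.
  by move: Qz; rewrite -hPQ rootP eqxx.
have [k [kpos [w [wc [wz hw]]]]] := @case_lem R z j hz jpos.
exists 1; split; first exact: ltr01.
exists k; split => //.
exists (fun p => w p * Q.[uu p] * ((1 + tt p) / 2) ^+ N); split.
  apply: continuous_subspaceT.
  apply: cM; first by apply: cM => //; apply: cH; exact: uu_cont.
  apply: cX; apply: cM; [apply: cD; [exact: cC | exact: tt_cont] | exact: cC].
split; first by rewrite !mulf_neq0.
move=> p _ hp.
rewrite (hP p hp) hPQ hornerM horner_exp hornerXsubC (hw p hp).
ring.
Qed.
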